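(* For every positive integer $n$ and every $T\in\mathrm{TSPP}_{n-1}$, the partition $\pi(T)$ is a modified balanced partition of size $n$.
   Context: For a partition $\lambda$ with conjugate $\lambda'$ and Durfee square side $l=\max\{i:\lambda_i\ge i\}$, its Frobenius notation is $(\lambda_1-1,\ldots,\lambda_l-l\mid \lambda'_1-1,\ldots,\lambda'_l-l)$. A modified balanced partition of size $n$ is a partition $\lambda=(\lambda_1,\ldots,\lambda_n)$ with $n$ parts, zero parts allowed, such that $\lambda_1\le n-1$ and $\lambda_i<\lambda'_i$ whenever $\lambda_i\ge i$. A plane partition inside an $(m,m,m)$-box is an array $(T_{i,j})_{1\le i,j\le m}$ of integers in $\{0,\ldots,m\}$ weakly decreasing along rows and columns; equivalently the set $\{(i,j,k):k\le T_{i,j}\}\subseteq\{1,\ldots,m\}^3$. It is totally symmetric if this set is invariant under all permutations of coordinates; $\mathrm{TSPP}_m$ denotes the set of these. For $T\in\mathrm{TSPP}_{n-1}$, $\mathrm{diag}(T)$ is the conjugate of the partition $(T_{1,1},\ldots,T_{n-1,n-1})$; if $\mathrm{diag}(T)=(a_1,\ldots,a_l\mid b_1,\ldots,b_l)$ then $\pi(T)$ is the partition with Frobenius notation $(a_1,\ldots,a_l\mid b_1+1,\ldots,b_l+1)$. *)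

(* Defs.v *)
From mathcomp Require Import all_boot.
Set Implicit Arguments. Unset Strict Implicit. Unset Printing Implicit Defensive.

(* Partitions are represented by weakly decreasing sequences of naturals
   (zero parts allowed); parts are 1-indexed: part s i = lambda_i. *)
Definition part (s : seq nat) (i : nat) : nat := nth 0 s i.-1.

Definition conjp (s : seq nat) (j : nat) : nat := count (fun x => j <= x) s.

Definition is_partition (s : seq nat) : bool := sorted geq s.

Definition conj_part (s : seq nat) : seq nat :=
  mkseq (fun j => conjp s j.+1) (part s 1).

Definition durfee (s : seq nat) : nat :=
  foldr maxn 0 [seq (if i <= part s i then i else 0) | i <- iota 1 (size s)].

Definition frob_a (s : seq nat) : seq nat :=
  [seq part s i - i | i <- iota 1 (durfee s)].
Definition frob_b (s : seq nat) : seq nat :=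
  [seq conjp s i - i | i <- iota 1 (durfee s)].

Definition of_frob (a b : seq nat) : seq nat :=
  let l := size a in
  mkseq (fun i0 => if i0.+1 <= l then nth 0 a i0 + i0.+1
                   else count (fun j => i0.+1 <= nth 0 b j + j.+1) (iota 0 l))
        (if l == 0 then 0 else (nth 0 b 0).+1).

(* Plane partition in an (m,m,m)-box: T : 'I_m -> 'I_m -> nat (0-indexed
   positions), entries in {0..m}, weakly decreasing along rows and columns. *)
Definition is_pp_box (m : nat) (T : 'I_m -> 'I_m -> nat) : Prop :=
  (forall i j, T i j <= m) /\
  (forall i j j' : 'I_m, j <= j' -> T i j' <= T i j) /\
  (forall i i' j : 'I_m, i <= i' -> T i' j <= T i j).

(* the associated set {(i,j,k) : k <= T i j} in {1..m}^3, 0-indexed: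
   (i,j,k) in the set iff k.+1 <= T i j *)
Definition cell_in (m : nat) (T : 'I_m -> 'I_m -> nat) (i j k : 'I_m) : bool :=
  k < T i j.

Definition is_tspp (m : nat) (T : 'I_m -> 'I_m -> nat) : Prop :=
  is_pp_box T /\
  forall i j k : 'I_m,
    [/\ cell_in T i j k = cell_in T j i k,
        cell_in T i j k = cell_in T i k j,
        cell_in T i j k = cell_in T k j i,
        cell_in T i j k = cell_in T j k i &
        cell_in T i j k = cell_in T k i j].

Definition diagT (m : nat) (T : 'I_m -> 'I_m -> nat) : seq nat :=
  conj_part [seq T i i | i <- enum 'I_m].

Definition piT (m : nat) (T : 'I_m -> 'I_m -> nat) : seq nat :=
  let d := diagT T in of_frob (frob_a d) [seq x.+1 | x <- frob_b d].

(* modified balanced partition of size n: a partition with at most n nonzero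
   parts (i.e. n parts, zeros allowed), lambda_1 <= n-1, and
   lambda_i < lambda'_i whenever lambda_i >= i. *)
Definition is_mbp (n : nat) (s : seq nat) : bool :=
  [&& is_partition s,
      count (fun x => 0 < x) s <= n,
      part s 1 <= n.-1 &
      [forall i : 'I_n, (i.+1 <= part s i.+1) ==> (part s i.+1 < conjp s i.+1)]].

(* Main.v *)
Require Import Defs.
From mathcomp Require Import all_boot.

Lemma geq_trans' : transitive geq.
Proof. by move=> a b c h1 h2; apply: leq_trans h2 h1. Qed.

Lemma nth_mono s i j : sorted geq s -> i <= j -> nth 0 s j <= nth 0 s i.
Proof.
move=> ss ij; case: (ltnP j (size s)) => hj.
  exact: (sorted_leq_nth geq_trans' leqnn 0 ss) (leq_ltn_trans ij hj) hj ij.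
by rewrite nth_default.
Qed.

Lemma L1 s j k : sorted geq s -> j < size s -> k <= nth 0 s j -> j.+1 <= conjp s k.
Proof.
rewrite /conjp; elim: s j => [|x s IH] j //= ss hj hk.
have hall := order_path_min geq_trans' ss.
have hxk : k <= x.
  case: j hj hk => [|j] //= hj hk; apply: leq_trans hk _.
  by move/allP: hall; apply; rewrite mem_nth.
rewrite hxk add1n ltnS; case: j hj hk => [|j] //= hj hk.
by apply: IH => //; exact: path_sorted ss.
Qed.

Lemma L2 s j k : sorted geq s -> j < conjp s k -> k <= nth 0 s j.
Proof.
rewrite /conjp; elim: s j => [|x s IH] j //= ss hj.
have hall := order_path_min geq_trans' ss.
case hxk: (k <= x); last first.
  exfalso; move: hj; rewrite hxk add0n.
  suff -> : count (fun x0 => k <= x0) s = 0 by [].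
  apply/eqP; rewrite -leqn0 leqNgt -has_count; apply/hasPn => y ys.
  move/allP: hall => /(_ y ys) yx; apply/negP => ky.
  by move: hxk; rewrite (leq_trans ky yx).
case: j hj => [|j] //= hj; apply: IH; first exact: path_sorted ss.
by move: hj; rewrite hxk.
Qed.

Lemma foldr_max_in (L : seq nat) : foldr maxn 0 L \in 0 :: L.
Proof.
elim: L => [|x L IH] //=; rewrite /maxn; case: ltnP => _.
  by move: IH; rewrite !inE => /orP [->|->]; rewrite ?orbT.
by rewrite !inE eqxx orbT.
Qed.

Lemma foldr_max_ge (L : seq nat) x : x \in L -> x <= foldr maxn 0 L.
Proof.
elim: L => [|y L IH] //=; rewrite inE => /orP [/eqP->|xL].
  exact: leq_maxl.
by apply: leq_trans (IH xL) (leq_maxr _ _).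
Qed.

Lemma durfeeP s i : sorted geq s -> 0 < i -> (i <= durfee s) = (i <= part s i).
Proof.
move=> ss i0; apply/idP/idP => h.
  move: (foldr_max_in [seq (if i <= part s i then i else 0) | i <- iota 1 (size s)]).
  rewrite -/(durfee s) inE => /orP [/eqP e|]; first by move: h; rewrite e leqNgt i0.
  case/mapP => j _; case: ifP => hj e; last by move: h; rewrite e leqNgt i0.
  rewrite e in h; apply: (leq_trans h); apply: (leq_trans hj).
  rewrite /part; apply: nth_mono => //; by rewrite -!subn1 leq_sub2r.
rewrite /durfee; apply: foldr_max_ge.
apply/mapP; exists i; last by rewrite h.
rewrite mem_iota i0 /= add1n; case: i i0 h => // i _; rewrite /part /= => h.
rewrite ltnS ltnNge; apply/negP => hs; move: h; rewrite nth_default //.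
Qed.

Lemma conjp_mono s a b : a <= b -> conjp s b <= conjp s a.
Proof. move=> ab; apply: sub_count => x /= h; exact: leq_trans ab h. Qed.

Lemma nth_pos_size s j : 0 < nth 0 s j -> j < size s.
Proof. by move=> h; rewrite ltnNge; apply/negP => hs; move: h; rewrite nth_default. Qed.

Lemma conjp_big s k : sorted geq s -> nth 0 s 0 < k -> conjp s k = 0.
Proof.
move=> ss h; case e: (conjp s k) => [|c] //.
have := L2 s 0 k ss; rewrite e => /(_ isT) hk; by move: h; rewrite ltnNge hk.
Qed.

Section Abs.
Variable D : seq nat.
Hypothesis sD : sorted geq D.
Hypothesis bD : forall x, x \in D -> x <= size D.
Hypothesis PD : forall k c, 0 < k -> k <= c -> c <= size D -> k <= part D c -> c <= part D k.

Let d := conj_part D.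

Lemma d1 j : 0 < j -> part d j = conjp D j.
Proof.
move=> j0; rewrite /d /conj_part /part; case: (ltnP j.-1 (part D 1)) => h.
  by rewrite nth_mkseq // prednK.
rewrite nth_default ?size_mkseq // conjp_big //.
by move: h; rewrite /part /= -ltnS prednK.
Qed.

Lemma dsz : size d = part D 1.
Proof. by rewrite /d /conj_part size_mkseq. Qed.

Lemma dsorted : sorted geq d.
Proof.
apply/(sortedP 0) => i hi; rewrite dsz in hi.
rewrite /d /conj_part !nth_mkseq //; last exact: ltnW.
exact: conjp_mono.
Qed.


Let l := durfee d.
Let lam := of_frob (frob_a d) [seq x.+1 | x <- frob_b d].

Lemma Dd1 i : 0 < i -> (i <= l) = (i <= part d i).
Proof. exact: durfeeP dsorted. Qed.

Lemma Dd3 k : 0 < k -> k <= l -> k <= conjp d k.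
Proof.
move=> k0 kl; have hk : k <= part d k by rewrite -Dd1.
have := L1 d k.-1 k dsorted; rewrite prednK //; apply => //.
have := nth_pos_size d k.-1; rewrite prednK //; apply; exact: leq_trans k0 hk.
Qed.

Lemma size_lam : size lam = if l == 0 then 0 else (conjp d 1).+1.
Proof.
rewrite /lam /of_frob size_mkseq /frob_a size_map size_iota -/l.
case: eqP => // /eqP l0.
have l1 : 0 < l by rewrite lt0n.
rewrite /frob_b (nth_map 0); last by rewrite size_map size_iota.
rewrite (nth_map 0) ?size_iota // nth_iota // subn1 prednK //.
exact: Dd3.
Qed.

Lemma lam_nth i : i < size lam ->
  nth 0 lam i = if i.+1 <= l then nth 0 (frob_a d) i + i.+1
                   else count (fun j => i.+1 <= nth 0 [seq x.+1 | x <- frob_b d] j + j.+1) (iota 0 l).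
Proof.
move=> hs; rewrite /lam /of_frob nth_mkseq; last by move: hs; rewrite /lam /of_frob size_mkseq.
by rewrite /frob_a size_map size_iota.
Qed.

Lemma conjp_d1 : l <= conjp d 1.
Proof.
case: (posnP l) => [->//|l0]; apply: leq_trans (Dd3 l l0 (leqnn l)) _.
exact: conjp_mono.
Qed.

Lemma lam_lo i : i < l -> nth 0 lam i = part d i.+1.
Proof.
move=> il; have hs : i < size lam.
  rewrite size_lam; case: eqP => [l0|_]; first by rewrite l0 in il.
  by apply: leq_trans il _; apply: leq_trans conjp_d1 _.
rewrite lam_nth // il /frob_a (nth_map 0) ?size_iota // nth_iota // add1n subnK //.
by rewrite -Dd1.
Qed.

Lemma lam_hi i : l <= i -> i < size lam ->
  nth 0 lam i = count (fun j => i <= conjp d j.+1) (iota 0 l).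
Proof.
move=> li hs; rewrite lam_nth // ifN -?leqNgt //.
apply: eq_in_count => j; rewrite mem_iota add0n /= => jl.
rewrite /frob_b (nth_map 0) ?size_map ?size_iota // (nth_map 0) ?size_iota //.
rewrite nth_iota; last exact: jl.
rewrite add1n addSn subnK; last exact: Dd3.
by rewrite ltnS.
Qed.

Lemma lam_hi_le i : l <= i -> nth 0 lam i <= l.
Proof.
move=> li; case: (ltnP i (size lam)) => hs; last by rewrite nth_default.
by rewrite lam_hi //; apply: leq_trans (count_size _ _) _; rewrite size_iota.
Qed.

Lemma lam_sorted : sorted geq lam.
Proof.
apply/(sortedP 0) => i hi /=.
case: (ltnP i.+1 l) => h1.
  rewrite !lam_lo //; last exact: ltnW.
  exact: nth_mono dsorted _.
case: (ltnP i l) => h2.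
  apply: leq_trans (lam_hi_le (i.+1) h1) _.
  rewrite lam_lo //; apply: leq_trans h1 _; by rewrite -Dd1.
rewrite !lam_hi //; last exact: ltnW.
by apply: sub_count => j /= hj; apply: ltnW.
Qed.

Lemma key k : 0 < k -> k <= l -> part d k <= conjp d k.
Proof.
move=> k0 kl; have hkc : k <= part d k by rewrite -Dd1.
rewrite d1 // in hkc *; set c := conjp D k in hkc *.
have c0 : 0 < c by apply: leq_trans k0 hkc.
have hc : c <= size D by apply: count_size.
have hkD : k <= part D c.
  by apply: (L2 D c.-1 k sD); rewrite prednK.
have hcD : c <= part D k by apply: PD.
have := L1 d c.-1 k dsorted; rewrite prednK //; apply.
  rewrite dsz; apply: leq_trans hcD _; rewrite /part; exact: nth_mono sD _.
rewrite -/(part d c) d1 //.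
have := L1 D k.-1 c sD; rewrite prednK //; apply => //.
exact: leq_trans hkc hc.
Qed.

Lemma partD1 : part D 1 <= size D.
Proof.
rewrite /part /=; case: (ltnP 0 (size D)) => h.
  by apply: bD; rewrite mem_nth.
by rewrite nth_default.
Qed.

Lemma abs_main : is_mbp (size D).+1 lam.
Proof.
apply/and4P; split.
- exact: lam_sorted.
- apply: leq_trans (count_size _ _) _; rewrite size_lam; case: eqP => // _.
  rewrite ltnS; apply: leq_trans (count_size _ _) _; rewrite -/d dsz.
  exact: partD1.
- rewrite /= /part /=; case: (posnP l) => l0.
    by rewrite nth_default // size_lam l0.
  rewrite lam_lo // d1 //; exact: count_size.
apply/forallP => i; apply/implyP; rewrite /part /= => hi.
have hs : i < size lam.
  by rewrite ltnNge; apply/negP => hs; move: hi; rewrite nth_default.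
have il : i < l.
  rewrite ltnNge; apply/negP => li; have := lam_hi_le i li.
  by move=> h; move: (leq_trans hi h); rewrite ltnNge li.
rewrite lam_lo // in hi *; set c := part d i.+1 in hi *.
have kc : c <= conjp d i.+1 by apply: key.
have l0 : l != 0 by rewrite -lt0n; apply: leq_ltn_trans il.
have cs : c < size lam.
  rewrite size_lam (negbTE l0) ltnS; apply: leq_trans kc _; exact: conjp_mono.
apply: (L1 lam c i.+1 lam_sorted cs).
case: (ltnP c l) => cl.
  rewrite lam_lo //; apply: leq_trans il _.
  have := Dd1 l; rewrite lt0n l0 leqnn => /(_ isT) /esym hl.
  apply: leq_trans hl _; rewrite /part; apply: nth_mono dsorted _.
  by rewrite /= -ltnS prednK // lt0n.
rewrite lam_hi // -(subnKC il) iotaD count_cat; apply: leq_trans (leq_addr _ _).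
rewrite (eq_in_count (a2:=predT)) ?count_predT ?size_iota // => j.
rewrite mem_iota add0n /= => jl; apply: leq_trans kc _; exact: conjp_mono.
Qed.

End Abs.

Theorem mainTheorem6 (n : nat) (T : 'I_n.-1 -> 'I_n.-1 -> nat) :
  0 < n -> is_tspp T -> is_mbp n (piT T).
Proof.
move=> n0 [[hb [hr hc]] hs].
set m := n.-1 in T hb hr hc hs *.
set D := [seq T i i | i <- enum 'I_m].
have sz : size D = m by rewrite size_map size_enum_ord.
have nthD : forall i : 'I_m, nth 0 D i = T i i.
  by move=> i; rewrite (nth_map i) ?size_enum_ord // nth_ord_enum.
have sD : sorted geq D.
  apply/(sortedP 0) => i; rewrite sz => hi /=.
  have hi' : i < m by apply: ltnW.
  rewrite -[i]/(nat_of_ord (Ordinal hi')) -[i.+1]/(nat_of_ord (Ordinal hi)) !nthD.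
  apply: leq_trans (hc _ _ _ _) (hr _ _ _ _) => /=; exact: leqnSn.
have bD : forall x, x \in D -> x <= size D.
  by move=> x /mapP [i _ ->]; rewrite sz.
have PD : forall k c, 0 < k -> k <= c -> c <= size D -> k <= part D c -> c <= part D k.
  move=> k c k0 kc; rewrite sz => cm.
  have c0 : 0 < c by apply: leq_trans kc.
  have hC : c.-1 < m by rewrite prednK.
  have hK : k.-1 < m by rewrite prednK //; apply: leq_trans kc cm.
  rewrite /part -[c.-1]/(nat_of_ord (Ordinal hC)) -[k.-1]/(nat_of_ord (Ordinal hK)) !nthD.
  move=> h; case: (hs (Ordinal hC) (Ordinal hC) (Ordinal hK)) => _ _ e3 _ _.
  move: e3; rewrite /cell_in /= (prednK k0) (prednK c0) h => /esym h2.
  apply: leq_trans h2 _; apply: hr => /=; rewrite -!subn1; exact: leq_sub2r.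
have e : n = (size D).+1 by rewrite sz prednK.
move: (abs_main D sD bD PD); rewrite -e.
done.
Qed.
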